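(* Let $g=\begin{pmatrix}a&b\\c&d\end{pmatrix}\in\mathrm{SL}_2(\mathbb R)$ with $g\notin s$. Then $g\in S$ if and only if $|ad|+|bc|=1$. If $g\notin S$, then there exist uniquely determined $y_1,y_2>0$, $\delta_1,\delta_2\in\{0,1\}$, $v>0$ and a sign $\pm$ such that $$g=\pm\begin{pmatrix}y_1^{1/2}&0\\0&y_1^{-1/2}\end{pmatrix}\omega^{\delta_1}\begin{pmatrix}\cosh v&\sinh v\\ \sinh v&\cosh v\end{pmatrix}\omega^{\delta_2}\begin{pmatrix}y_2^{1/2}&0\\0&y_2^{-1/2}\end{pmatrix},$$ and concretely $y_1=|ab/(cd)|^{1/2}$, $y_2=|ac/(bd)|^{1/2}$, $v=\log(|ad|^{1/2}+|cb|^{1/2})$, and $(\delta_1,\delta_2)=(0,0),(1,1),(1,0),(0,1)$ according as the sign pattern of $(a,b,c,d)$ is $\pm(+,+,+,+)$, $\pm(+,-,-,+)$, $\pm(+,+,-,-)$, $\pm(+,-,+,-)$ respectively.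
   Context: $\omega=\begin{pmatrix}0&-1\\1&0\end{pmatrix}$. $s=\{g\in\mathrm{SL}_2(\mathbb R): gz_1=z_2\text{ for some }z_1,z_2\in\{0,i\infty\}\}$, which equals $\{g: abcd=0\}$; $S=s\cup\{g\in\mathrm{SL}_2(\mathbb R): g(iy_1)=iy_2\text{ for some }y_1,y_2>0\}$. *)

(* Defs.v *)
From Stdlib Require Import Reals.
From Coquelicot Require Import Coquelicot.
Open Scope R_scope.

Record mat2 := M2 { e11 : R; e12 : R; e21 : R; e22 : R }.

Definition mmul (g h : mat2) : mat2 :=
  M2 (e11 g * e11 h + e12 g * e21 h) (e11 g * e12 h + e12 g * e22 h)
     (e21 g * e11 h + e22 g * e21 h) (e21 g * e12 h + e22 g * e22 h).

Definition mscale (k : R) (g : mat2) : mat2 :=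
  M2 (k * e11 g) (k * e12 g) (k * e21 g) (k * e22 g).

Definition det2 (g : mat2) : R := e11 g * e22 g - e12 g * e21 g.

Definition SL2 (g : mat2) : Prop := det2 g = 1.

Definition id2 : mat2 := M2 1 0 0 1.
Definition omega : mat2 := M2 0 (-1) 1 0.
Definition omega_pow (delta : bool) : mat2 := if delta then omega else id2.

Definition diag_y (y : R) : mat2 := M2 (sqrt y) 0 0 (/ sqrt y).
Definition hyp (v : R) : mat2 := M2 (cosh v) (sinh v) (sinh v) (cosh v).

Definition mobius (g : mat2) (z : C) : C :=
  ((RtoC (e11 g) * z + RtoC (e12 g)) / (RtoC (e21 g) * z + RtoC (e22 g)))%C.

(* s = {g : g z1 = z2 for some z1,z2 in {0, i oo}} = {g : abcd = 0} (as stated in the context) *)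
Definition in_s (g : mat2) : Prop := e11 g * e12 g * e21 g * e22 g = 0.

Definition in_S (g : mat2) : Prop :=
  in_s g \/ exists y1 y2 : R, 0 < y1 /\ 0 < y2 /\
    mobius g (RtoC y1 * Ci)%C = (RtoC y2 * Ci)%C.

Definition decomposition (g : mat2) (y1 y2 : R) (d1 d2 : bool) (v eps : R) : Prop :=
  0 < y1 /\ 0 < y2 /\ 0 < v /\ (eps = 1 \/ eps = -1) /\
  g = mscale eps (mmul (diag_y y1) (mmul (omega_pow d1)
         (mmul (hyp v) (mmul (omega_pow d2) (diag_y y2))))).

(* Main.v *)
Require Import Defs.
From Stdlib Require Import Reals.
From Coquelicot Require Import Coquelicot.
From Stdlib Require Import Lra Psatz.
Open Scope R_scope.
Ltac nz := repeat split; try (apply Rgt_not_eq; first [lra | nra]).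

Lemma sq_lemma y k : 0 <= y -> (k = y*y \/ k = -(y*y)) -> y = sqrt (Rabs k).
Proof.
  intros Hy [-> | ->].
  - rewrite Rabs_pos_eq by nra. now rewrite sqrt_square.
  - rewrite Rabs_Ropp, Rabs_pos_eq by nra. now rewrite sqrt_square.
Qed.

Lemma build (al be ga de p q : R) : 0<al -> 0<be -> 0<ga -> 0<de -> 0<p -> 0<q ->
  p*p = al*de -> q*q = be*ga -> exists s1 s2, 0<s1 /\ 0<s2 /\ al = s1*s2*p /\
  be = s1*q/s2 /\ ga = s2*q/s1 /\ de = p/(s1*s2).
Proof.
  intros Hal Hbe Hga Hde Hp Hq Ep Eq.
  assert (Hx : 0 < al*be/(p*q)).
  { apply Rdiv_lt_0_compat; nra. }
  set (s1 := sqrt (al*be/(p*q))).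
  assert (Hs1 : 0 < s1) by (apply sqrt_lt_R0; exact Hx).
  assert (E : s1*s1 = al*be/(p*q)) by (apply sqrt_sqrt; lra).
  clearbody s1.
  assert (Hs2 : 0 < al/(p*s1)) by (apply Rdiv_lt_0_compat; nra).
  exists s1, (al/(p*s1)). split; [lra|]. split; [lra|].
  split; [field; nz|].
  split.
  { replace (s1*q/(al/(p*s1))) with (s1*s1*q*p/al) by (field; nz).
    rewrite E. field; nz. }
  split.
  { replace (al/(p*s1)*q/s1) with (al*q/(p*(s1*s1))) by (field; nz).
    rewrite E. replace ga with (q*q/be) by (rewrite Eq; field; nz). field; nz. }
  replace (p/(s1*(al/(p*s1)))) with (p*p/al) by (field; nz).
  rewrite Ep. field; nz.
Qed.

Lemma hyp_build P Q : 0<P -> 0<Q -> P*P - Q*Q = 1 ->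
  cosh (ln (P+Q)) = P /\ sinh (ln (P+Q)) = Q /\ 0 < ln (P+Q).
Proof.
  intros HP HQ H.
  assert (Hinv : / (P+Q) = P - Q).
  { apply Rmult_eq_reg_l with (P+Q); [|lra]. rewrite Rinv_r by lra. nra. }
  unfold cosh, sinh. rewrite exp_Ropp, exp_ln, Hinv by lra.
  split; [lra|]. split; [lra|].
  rewrite <- ln_1. apply ln_increasing; nra.
Qed.

Lemma cosh_sinh_facts v : 0 < v -> 0 < cosh v /\ 0 < sinh v /\
  cosh v * cosh v - sinh v * sinh v = 1 /\ cosh v + sinh v = exp v.
Proof.
  intros Hv. unfold cosh, sinh. rewrite exp_Ropp.
  assert (He : 1 < exp v) by (rewrite <- exp_0; apply exp_increasing; lra).
  assert (0 < / exp v < 1).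
  { split. apply Rinv_0_lt_compat; lra. rewrite <- Rinv_1. apply Rinv_lt_contravar; lra. }
  split; [lra|]. split; [lra|]. split; [field; lra|field; lra].
Qed.

Lemma mob_formula a b c d y : d <> 0 ->
  mobius (M2 a b c d) (RtoC y * Ci)%C =
  ((a*c*y*y + b*d)/(d*d + c*c*y*y), (a*d - b*c)*y/(d*d+c*c*y*y)).
Proof.
  intros Hd. assert (0 < d*d + c*c*y*y) by nra.
  unfold mobius, Cdiv, Cmult, Cinv, Cplus, RtoC, Ci; simpl.
  f_equal; field; nz.
Qed.
Lemma decomp_facts a b c d y1 y2 d1 d2 v eps :
  decomposition (M2 a b c d) y1 y2 d1 d2 v eps ->
  y1 = sqrt (Rabs (a * b / (c * d))) /\
  y2 = sqrt (Rabs (a * c / (b * d))) /\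
  v = ln (sqrt (Rabs (a * d)) + sqrt (Rabs (c * b))) /\
  ((0 < a * b -> 0 < a * c -> 0 < a * d -> (d1, d2) = (false, false)) /\
   (a * b < 0 -> a * c < 0 -> 0 < a * d -> (d1, d2) = (true, true)) /\
   (0 < a * b -> a * c < 0 -> a * d < 0 -> (d1, d2) = (true, false)) /\
   (a * b < 0 -> 0 < a * c -> a * d < 0 -> (d1, d2) = (false, true))) /\
  ((0 < a*b /\ 0 < a*c /\ 0 < a*d) \/ (a*b < 0 /\ a*c < 0 /\ 0 < a*d) \/
   (0 < a*b /\ a*c < 0 /\ a*d < 0) \/ (a*b < 0 /\ 0 < a*c /\ a*d < 0)) /\
  0 < a * eps * (if d1 then -1 else 1).
Proof.
  intros [Hy1 [Hy2 [Hv [Heps Heq]]]].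
  destruct (cosh_sinh_facts v Hv) as [Hch [Hsh [Hcs Hexp]]].
  assert (Hs1 : 0 < sqrt y1) by (apply sqrt_lt_R0; lra).
  assert (Hs2 : 0 < sqrt y2) by (apply sqrt_lt_R0; lra).
  assert (E1 : sqrt y1 * sqrt y1 = y1) by (apply sqrt_sqrt; lra).
  assert (E2 : sqrt y2 * sqrt y2 = y2) by (apply sqrt_sqrt; lra).
  unfold diag_y, hyp in Heq.
  remember (sqrt y1) as s1 eqn:Hs1e. remember (sqrt y2) as s2 eqn:Hs2e.
  clear Hs1e Hs2e. subst y1 y2.
  remember (cosh v) as ch eqn:Hche. remember (sinh v) as sh eqn:Hshe.
  clear Hche Hshe.
  assert (Pab : 0 < s1*s1*(ch*sh)) by (repeat apply Rmult_lt_0_compat; lra).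
  assert (Pac : 0 < s2*s2*(ch*sh)) by (repeat apply Rmult_lt_0_compat; lra).
  assert (Pc : 0 < ch*ch) by (repeat apply Rmult_lt_0_compat; lra).
  assert (Ps : 0 < sh*sh) by (repeat apply Rmult_lt_0_compat; lra).
  assert (Pa1 : 0 < s1*s2*ch) by (repeat apply Rmult_lt_0_compat; lra).
  assert (Pa2 : 0 < s1*s2*sh) by (repeat apply Rmult_lt_0_compat; lra).
  destruct Heps as [-> | ->]; destruct d1, d2;
  unfold mscale, mmul, omega_pow, hyp, omega, id2 in Heq; cbn [e11 e12 e21 e22] in Heq;
  injection Heq as Ha Hb Hc Hd.
  all: (first [ assert (Eab : a*b = s1*s1*(ch*sh)) by (rewrite Ha, Hb; field; nz)
         | assert (Eab : a*b = -(s1*s1*(ch*sh))) by (rewrite Ha, Hb; field; nz)]).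
  all: (first [ assert (Eac : a*c = s2*s2*(ch*sh)) by (rewrite Ha, Hc; field; nz)
         | assert (Eac : a*c = -(s2*s2*(ch*sh))) by (rewrite Ha, Hc; field; nz)]).
  all: (first [ assert (Ead : a*d = ch*ch) by (rewrite Ha, Hd; field; nz)
         | assert (Ead : a*d = -(sh*sh)) by (rewrite Ha, Hd; field; nz)]).
  all: (first [ assert (Ea : a = s1*s2*ch) by (rewrite Ha; field; nz)
         | assert (Ea : a = -(s1*s2*ch)) by (rewrite Ha; field; nz)
         | assert (Ea : a = s1*s2*sh) by (rewrite Ha; field; nz)
         | assert (Ea : a = -(s1*s2*sh)) by (rewrite Ha; field; nz)]).
  all: (split; [apply sq_lemma; [nra | rewrite Ha, Hb, Hc, Hd;
      first [left; field; nz | right; field; nz]] |]).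
  all: (split; [apply sq_lemma; [nra | rewrite Ha, Hb, Hc, Hd;
      first [left; field; nz | right; field; nz]] |]).
  all: (split; [
    assert (X : sqrt (Rabs (a*d)) + sqrt (Rabs (c*b)) = ch + sh);
    [ first [ rewrite <- (sq_lemma ch (a*d)), <- (sq_lemma sh (c*b));
                [reflexivity | lra | rewrite ?Ha, ?Hb, ?Hc, ?Hd; first [left; field; nz | right; field; nz]
                 | lra | rewrite ?Ha, ?Hb, ?Hc, ?Hd; first [left; field; nz | right; field; nz]]
            | rewrite <- (sq_lemma sh (a*d)), <- (sq_lemma ch (c*b));
                [ring | lra | rewrite ?Ha, ?Hb, ?Hc, ?Hd; first [left; field; nz | right; field; nz]
                 | lra | rewrite ?Ha, ?Hb, ?Hc, ?Hd; first [left; field; nz | right; field; nz]] ]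
    | rewrite X, Hexp, ln_exp; reflexivity ] |]).
  all: (split; [repeat split; intros; first [reflexivity | exfalso; lra] |]).
  all: (split; [ first [ left; split; [|split]; lra
                  | right; left; split; [|split]; lra
                  | right; right; left; split; [|split]; lra
                  | right; right; right; split; [|split]; lra ] |]).
  all: lra.
Qed.
Lemma decomp_uniq a b c d y1 y2 d1 d2 v eps y1' y2' d1' d2' v' eps' :
  decomposition (M2 a b c d) y1 y2 d1 d2 v eps ->
  decomposition (M2 a b c d) y1' y2' d1' d2' v' eps' ->
  (y1, y2, d1, d2, v, eps) = (y1', y2', d1', d2', v', eps').
Proof.
  intros H H'.
  pose proof H as [_ [_ [_ [He _]]]]. pose proof H' as [_ [_ [_ [He' _]]]].
  apply decomp_facts in H. apply decomp_facts in H'.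
  destruct H as [A1 [A2 [A3 [[I1 [I2 [I3 I4]]] [Pat Sg]]]]].
  destruct H' as [B1 [B2 [B3 [[J1 [J2 [J3 J4]]] [_ Sg']]]]].
  subst y1 y2 v y1' y2' v'.
  assert (Hd : (d1, d2) = (d1', d2')).
  { destruct Pat as [[X [Y Z]]|[[X [Y Z]]|[[X [Y Z]]|[X [Y Z]]]]].
    - rewrite I1, J1; auto.
    - rewrite I2, J2; auto.
    - rewrite I3, J3; auto.
    - rewrite I4, J4; auto. }
  injection Hd as -> ->.
  destruct He as [-> | ->], He' as [-> | ->]; destruct d1'; try reflexivity; exfalso; lra.
Qed.

Lemma part1 a b c d : a*d - b*c = 1 -> a*b*c*d <> 0 ->
  ((exists y1 y2 : R, 0 < y1 /\ 0 < y2 /\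
    mobius (M2 a b c d) (RtoC y1 * Ci)%C = (RtoC y2 * Ci)%C) <->
  Rabs (a * d) + Rabs (b * c) = 1).
Proof.
  intros Hdet Hn.
  assert (a <> 0 /\ b <> 0 /\ c <> 0 /\ d <> 0) as [Ha [Hb [Hc Hd]]].
  { repeat split; intro; subst; apply Hn; ring. }
  split.
  - intros [y [y2 [Hy [Hy2 E]]]].
    rewrite mob_formula in E by exact Hd.
    apply (f_equal fst) in E. simpl in E.
    assert (HD : 0 < d*d + c*c*y*y) by nra.
    assert (E2 : a*c*y*y + b*d = 0).
    { replace (a*c*y*y + b*d) with ((a*c*y*y + b*d)/(d*d + c*c*y*y) * (d*d + c*c*y*y)) by (field; lra).
      replace ((a*c*y*y + b*d)/(d*d + c*c*y*y)) with 0 by lra. ring. }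
    assert (Hac : 0 < (a*c)*(a*c)) by (assert (a*c <> 0) by (intro HH; apply Hn; first [replace (a*b*c*d) with ((a*c)*(b*d)) by ring; rewrite HH; ring | replace (a*b*c*d) with ((a*d)*(b*c)) by ring; rewrite HH; ring]); nra).
    assert (Hp : a*d*(b*c) < 0).
    { replace (a*d*(b*c)) with ((a*c)*(b*d)) by ring.
      replace (b*d) with (-(a*c*y*y)) by lra.
      replace (a*c*(-(a*c*y*y))) with (-((a*c)*(a*c)*(y*y))) by ring.
      assert (0 < a*c*(a*c)*(y*y)) by (apply Rmult_lt_0_compat; nra). lra. }
    destruct (Rcase_abs (a*d)), (Rcase_abs (b*c)).
    + nra.
    + rewrite Rabs_left, Rabs_right by lra. nra.
    + rewrite Rabs_right, Rabs_left by lra. lra.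
    + nra.
  - intros Habs.
    assert (Had : 0 < a*d /\ b*c < 0).
    { destruct (Rcase_abs (a*d)), (Rcase_abs (b*c)).
      - rewrite Rabs_left, Rabs_left in Habs by lra. lra.
      - rewrite Rabs_left, Rabs_right in Habs by lra.
        assert (b*c <> 0) by (intro HH; apply Hn; first [replace (a*b*c*d) with ((a*c)*(b*d)) by ring; rewrite HH; ring | replace (a*b*c*d) with ((a*d)*(b*c)) by ring; rewrite HH; ring]). lra.
      - rewrite Rabs_right, Rabs_left in Habs by lra.
        assert (a*d <> 0) by (intro HH; apply Hn; first [replace (a*b*c*d) with ((a*c)*(b*d)) by ring; rewrite HH; ring | replace (a*b*c*d) with ((a*d)*(b*c)) by ring; rewrite HH; ring]). lra.
      - rewrite Rabs_right, Rabs_right in Habs by lra.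
        assert (b*c <> 0) by (intro HH; apply Hn; first [replace (a*b*c*d) with ((a*c)*(b*d)) by ring; rewrite HH; ring | replace (a*b*c*d) with ((a*d)*(b*c)) by ring; rewrite HH; ring]). lra. }
    assert (Hq : a*c*(b*d) < 0) by (replace (a*c*(b*d)) with (a*d*(b*c)) by ring; nra).
    assert (Hac : a*c <> 0) by (intro HH; apply Hn; first [replace (a*b*c*d) with ((a*c)*(b*d)) by ring; rewrite HH; ring | replace (a*b*c*d) with ((a*d)*(b*c)) by ring; rewrite HH; ring]).
    assert (Hx : 0 < -(b*d)/(a*c)).
    { destruct (Rlt_or_le 0 (a*c)).
      - apply Rdiv_lt_0_compat; nra.
      - replace (-(b*d)/(a*c)) with ((b*d)/(-(a*c))) by (field; auto).
        apply Rdiv_lt_0_compat; nra. }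
    set (y := sqrt (-(b*d)/(a*c))).
    assert (Hy : 0 < y) by (apply sqrt_lt_R0; exact Hx).
    assert (Eyy : y*y = -(b*d)/(a*c)) by (apply sqrt_sqrt; lra).
    clearbody y.
    assert (HD : 0 < d*d + c*c*y*y) by nra.
    exists y, (y/(d*d + c*c*y*y)).
    split; [exact Hy|]. split; [apply Rdiv_lt_0_compat; lra|].
    rewrite mob_formula by exact Hd.
    unfold RtoC, Ci, Cmult; simpl.
    f_equal.
    + replace (a*c*y*y + b*d) with 0.
      * field; lra.
      * replace (a*c*y*y) with (a*c*(y*y)) by ring. rewrite Eyy. field; auto.
    + rewrite Hdet. field; lra.
Qed.
Ltac fixabs H := first [ rewrite Rabs_pos_eq in H by lra
  | rewrite Rabs_left in H by lra; apply (f_equal Ropp) in H; rewrite Ropp_involutive in H ].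

Ltac fin s1 s2 Ea Eb Ec Ed Hch Hsh :=
  unfold decomposition; split; [nra|]; split; [nra|]; split; [lra|];
  split; [first [left; reflexivity | right; reflexivity] |];
  unfold mscale, mmul, diag_y, omega_pow, hyp, omega, id2; cbn [e11 e12 e21 e22];
  rewrite !sqrt_square by lra; rewrite Hch, Hsh;
  f_equal; [rewrite Ea | rewrite Eb | rewrite Ec | rewrite Ed]; field; nz.

Ltac try8 s1 s2 v Ea Eb Ec Ed Hch Hsh :=
  first [ exists (s1*s1), (s2*s2), false, false, v, 1; fin s1 s2 Ea Eb Ec Ed Hch Hsh
        | exists (s1*s1), (s2*s2), false, false, v, (-1); fin s1 s2 Ea Eb Ec Ed Hch Hsh
        | exists (s1*s1), (s2*s2), true, true, v, 1; fin s1 s2 Ea Eb Ec Ed Hch Hsh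
        | exists (s1*s1), (s2*s2), true, true, v, (-1); fin s1 s2 Ea Eb Ec Ed Hch Hsh
        | exists (s1*s1), (s2*s2), true, false, v, 1; fin s1 s2 Ea Eb Ec Ed Hch Hsh
        | exists (s1*s1), (s2*s2), true, false, v, (-1); fin s1 s2 Ea Eb Ec Ed Hch Hsh
        | exists (s1*s1), (s2*s2), false, true, v, 1; fin s1 s2 Ea Eb Ec Ed Hch Hsh
        | exists (s1*s1), (s2*s2), false, true, v, (-1); fin s1 s2 Ea Eb Ec Ed Hch Hsh ].

Lemma sgn x : x <> 0 -> 0 < x \/ x < 0.
Proof. intros; lra. Qed.

Lemma decomp_exists a b c d : a*d - b*c = 1 -> 0 < a*d*(b*c) ->
  exists y1 y2 d1 d2 v eps, decomposition (M2 a b c d) y1 y2 d1 d2 v eps.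
Proof.
  intros Hdet Hp.
  assert (a <> 0 /\ b <> 0 /\ c <> 0 /\ d <> 0) as [Ha [Hb [Hc Hd]]].
  { repeat split; intro; subst; lra. }
  assert (Pa : 0 < Rabs a) by (apply Rabs_pos_lt; auto).
  assert (Pb : 0 < Rabs b) by (apply Rabs_pos_lt; auto).
  assert (Pc : 0 < Rabs c) by (apply Rabs_pos_lt; auto).
  assert (Pd : 0 < Rabs d) by (apply Rabs_pos_lt; auto).
  destruct (Rlt_or_le 0 (a*d)) as [Had | Had].
  - assert (Hbc : 0 < b*c) by nra.
    assert (HP : 0 < sqrt (a*d)) by (apply sqrt_lt_R0; lra).
    assert (HQ : 0 < sqrt (b*c)) by (apply sqrt_lt_R0; lra).
    assert (EP : sqrt (a*d) * sqrt (a*d) = Rabs a * Rabs d)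
      by (rewrite sqrt_sqrt, <- Rabs_mult, Rabs_pos_eq; lra).
    assert (EQ : sqrt (b*c) * sqrt (b*c) = Rabs b * Rabs c)
      by (rewrite sqrt_sqrt, <- Rabs_mult, Rabs_pos_eq; lra).
    destruct (hyp_build (sqrt (a*d)) (sqrt (b*c)) HP HQ) as [Hch [Hsh Hv]].
    { rewrite sqrt_sqrt, sqrt_sqrt; lra. }
    destruct (build _ _ _ _ _ _ Pa Pb Pc Pd HP HQ EP EQ)
      as [s1 [s2 [Hs1 [Hs2 [Ea [Eb [Ec Ed]]]]]]].
    remember (sqrt (a*d)) as P eqn:HPe. remember (sqrt (b*c)) as Q eqn:HQe.
    clear HPe HQe EP EQ.
    remember (ln (P+Q)) as v eqn:Hve. clear Hve.
    destruct (sgn a Ha), (sgn b Hb), (sgn c Hc), (sgn d Hd);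
      try (exfalso; nra);
      fixabs Ea; fixabs Eb; fixabs Ec; fixabs Ed;
      try8 s1 s2 v Ea Eb Ec Ed Hch Hsh.
  - assert (Had' : a*d < 0) by (assert (a*d <> 0) by (intro HH; rewrite HH in Hp; lra); lra).
    assert (Hbc : b*c < 0) by nra.
    assert (HP : 0 < sqrt (-(a*d))) by (apply sqrt_lt_R0; lra).
    assert (HQ : 0 < sqrt (-(b*c))) by (apply sqrt_lt_R0; lra).
    assert (EP : sqrt (-(a*d)) * sqrt (-(a*d)) = Rabs a * Rabs d)
      by (rewrite sqrt_sqrt, <- Rabs_mult, Rabs_left; lra).
    assert (EQ : sqrt (-(b*c)) * sqrt (-(b*c)) = Rabs b * Rabs c)
      by (rewrite sqrt_sqrt, <- Rabs_mult, Rabs_left; lra).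
    destruct (hyp_build (sqrt (-(b*c))) (sqrt (-(a*d))) HQ HP) as [Hch [Hsh Hv]].
    { rewrite sqrt_sqrt, sqrt_sqrt; lra. }
    destruct (build _ _ _ _ _ _ Pa Pb Pc Pd HP HQ EP EQ)
      as [s1 [s2 [Hs1 [Hs2 [Ea [Eb [Ec Ed]]]]]]].
    remember (sqrt (-(a*d))) as P eqn:HPe. remember (sqrt (-(b*c))) as Q eqn:HQe.
    clear HPe HQe EP EQ.
    remember (ln (Q+P)) as v eqn:Hve. clear Hve.
    destruct (sgn a Ha), (sgn b Hb), (sgn c Hc), (sgn d Hd);
      try (exfalso; nra);
      fixabs Ea; fixabs Eb; fixabs Ec; fixabs Ed;
      try8 s1 s2 v Ea Eb Ec Ed Hch Hsh.
Qed.

Theorem lemma4p3 (a b c d : R) (hdet : SL2 (M2 a b c d)) (hns : ~ in_s (M2 a b c d)) :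
  (in_S (M2 a b c d) <-> Rabs (a * d) + Rabs (b * c) = 1) /\
  (~ in_S (M2 a b c d) ->
     (exists! p : R * R * bool * bool * R * R,
        match p with (y1, y2, d1, d2, v, eps) =>
          decomposition (M2 a b c d) y1 y2 d1 d2 v eps end) /\
     (forall (y1 y2 : R) (d1 d2 : bool) (v eps : R),
        decomposition (M2 a b c d) y1 y2 d1 d2 v eps ->
        y1 = sqrt (Rabs (a * b / (c * d))) /\
        y2 = sqrt (Rabs (a * c / (b * d))) /\
        v = ln (sqrt (Rabs (a * d)) + sqrt (Rabs (c * b))) /\
        (0 < a * b -> 0 < a * c -> 0 < a * d -> (d1, d2) = (false, false)) /\
        (a * b < 0 -> a * c < 0 -> 0 < a * d -> (d1, d2) = (true, true)) /\
        (0 < a * b -> a * c < 0 -> a * d < 0 -> (d1, d2) = (true, false)) /\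
        (a * b < 0 -> 0 < a * c -> a * d < 0 -> (d1, d2) = (false, true)))).
Proof.
  unfold SL2, det2 in hdet; simpl in hdet.
  unfold in_s in hns; simpl in hns.
  pose proof (part1 a b c d hdet hns) as P1.
  assert (Hiff : in_S (M2 a b c d) <-> Rabs (a * d) + Rabs (b * c) = 1).
  { unfold in_S. split.
    - intros [H|H]; [contradiction | apply P1; exact H].
    - intros H; right; apply P1; exact H. }
  split; [exact Hiff|]. intros HnS.
  assert (Hp : 0 < a*d*(b*c)).
  { assert (Hn0 : a*d*(b*c) <> 0).
    { intro HH; apply hns. replace (a*b*c*d) with (a*d*(b*c)) by ring. exact HH. }
    destruct (Rlt_or_le 0 (a*d*(b*c))) as [H|H]; [exact H|].
    exfalso; apply HnS, Hiff.
    destruct (Rcase_abs (a*d)), (Rcase_abs (b*c)).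
    - nra.
    - rewrite Rabs_left, Rabs_right in * by lra. nra.
    - rewrite Rabs_right, Rabs_left by lra. lra.
    - assert (0 <= a*d*(b*c)) by nra. lra. }
  split.
  - destruct (decomp_exists a b c d hdet Hp) as [y1 [y2 [d1 [d2 [v [eps H]]]]]].
    exists (y1, y2, d1, d2, v, eps). split; [exact H|].
    intros [[[[[y1' y2'] d1'] d2'] v'] eps'] H'.
    apply (decomp_uniq a b c d); assumption.
  - intros y1 y2 d1 d2 v eps H.
    apply decomp_facts in H.
    destruct H as [A1 [A2 [A3 [[I1 [I2 [I3 I4]]] _]]]].
    repeat split; assumption.
Qed.
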